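(* Let $\Gamma$ be a commutative Noetherian ring, $M$ a nonzero $\Gamma$-module and $i$ a nonlimit ordinal. The following assertions are equivalent: (1) $t_i(M)=M$ but $t_{i-1}(M)=0$; (2) both of the following hold: (a) for every $x\in M$ there are prime ideals $\mathbf p_1,\dots,\mathbf p_r$ of coheight exactly $i$ and integers $n_1,\dots,n_r>0$ such that $\mathbf p_1^{n_1}\cdots\mathbf p_r^{n_r}x=0$; (b) if $\mathbf p$ is a prime ideal of coheight $<i$ and $x\in M$ satisfies $\mathbf p x=0$, then $x=0$; (3) every prime ideal in $\operatorname{Ass}(M)$ has coheight exactly $i$.
   Context: Define subsets $Z_j\subseteq\operatorname{Spec}\Gamma$ for ordinals $j$: $Z_0=\operatorname{Specm}\Gamma$ (maximal ideals); for a limit ordinal $j>0$, $Z_j=\bigcup_{k<j}Z_k$; for a successor ordinal $j$, $Z_j=Z_{j-1}\cup\operatorname{Max}(\operatorname{Spec}\Gamma\setminus Z_{j-1})$, where $\operatorname{Max}$ denotes inclusion-maximal elements. The coheight $\operatorname{cht}(\mathbf p)$ of a prime $\mathbf p$ is the least ordinal $j$ with $\mathbf p\in Z_j$. Each $Z_j$ is closed under specialization; $\mathcal T_j$ is the class of $\Gamma$-modules $T$ with $\operatorname{Supp}(T)=\{\mathbf p: T_{\mathbf p}\ne 0\}\subseteq Z_j$, and $t_j(M)$ is the largest submodule of $M$ lying in $\mathcal T_j$. Convention: $Z_{-1}=\emptyset$ and $t_{-1}(M)=0$ (used when $i=0$). $\operatorname{Ass}(M)$ is the set of primes of the form $\operatorname{ann}_\Gamma(x)$,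 $x\in M$. *)

(* Defs.v *)
From HB Require Import structures.
From mathcomp Require Import all_boot all_order all_algebra.
From mathcomp Require Import boolp classical_sets.
Set Implicit Arguments. Unset Strict Implicit. Unset Printing Implicit Defensive.
Import GRing.Theory.
Local Open Scope ring_scope.
Local Open Scope classical_set_scope.

Section Ideals.
Variable R : comPzRingType.

Definition is_ideal (I : set R) : Prop :=
  [/\ I 0, (forall a b, I a -> I b -> I (a + b)) & (forall r a, I a -> I (r * a))].

Definition is_prime_ideal (p : set R) : Prop :=
  [/\ is_ideal p, ~ p 1 & forall a b, p (a * b) -> p a \/ p b].

Definition is_maximal_ideal (m : set R) : Prop :=
  [/\ is_ideal m, ~ m 1 &
      forall I, is_ideal I -> ~ I 1 -> m `<=` I -> I = m].

Definition noetherian : Prop :=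
  forall I : nat -> set R, (forall n, is_ideal (I n)) ->
    (forall n, I n `<=` I n.+1) -> exists N, forall n, (N <= n)%N -> I n = I N.

Definition Spec : set (set R) := is_prime_ideal.
Definition Specm : set (set R) := is_maximal_ideal.
Definition Maxel (S : set (set R)) : set (set R) :=
  [set p | S p /\ forall q, S q -> p `<=` q -> q = p].

Definition iprod (I J : set R) : set R :=
  [set x | exists (n : nat) (a b : 'I_n -> R),
             (forall k, I (a k) /\ J (b k)) /\ x = \sum_(k < n) a k * b k].

Fixpoint ipow (I : set R) (n : nat) : set R :=
  if n is n'.+1 then iprod I (ipow I n') else [set: R].

Definition iprod_pows (s : seq (set R * nat)) : set R :=
  foldr (fun pn acc => iprod (ipow pn.1 pn.2) acc) [set: R] s.

End Ideals.
Arguments Spec R : clear implicits.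
Arguments Specm R : clear implicits.
Arguments noetherian R : clear implicits.

(* Well-ordered index types (standing in for ordinals)                       *)
Record wordType := WOrd {
  wo_car :> Type;
  wo_lt : wo_car -> wo_car -> Prop;
  wo_wf : well_founded wo_lt;
  wo_trans : forall x y z, wo_lt x y -> wo_lt y z -> wo_lt x z;
  wo_total : forall x y, wo_lt x y \/ x = y \/ wo_lt y x }.

Section Ordinals.
Variable W : wordType.
Local Notation lt := (@wo_lt W).

Definition is_pred (k j : W) : Prop := lt k j /\ forall m, lt m j -> m = k \/ lt m k.

Definition is_zero (j : W) : Prop := forall k, ~ lt k j.

Definition nonlimit (j : W) : Prop := is_zero j \/ exists k, is_pred k j.

End Ordinals.

Section Coheight.
Variables (R : comPzRingType) (W : wordType).
Local Notation lt := (@wo_lt W).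

Definition Zstep (j : W) (Zp : forall k, lt k j -> set (set R)) : set (set R) :=
  match pselect (exists k, is_pred k j) with
  | left h =>            (* successor: Z_j = Z_{j-1} \cup Max(Spec \ Z_{j-1}) *)
      let k := proj1_sig (cid h) in
      let Zk := Zp k (proj1 (proj2_sig (cid h))) in
      Zk `|` Maxel (Spec R `\` Zk)
  | right _ =>
      match pselect (exists k, lt k j) with
      | left _ => [set p | exists k (h : lt k j), Zp k h p]   (* limit: union *)
      | right _ => Specm R                                     (* Z_0 = Specm *)
      end
  end.

Definition Z : W -> set (set R) := Fix (@wo_wf W) (fun _ => set (set R)) Zstep.

Definition cht_eq (j : W) (p : set R) : Prop := Z j p /\ forall k, lt k j -> ~ Z k p.
Definition cht_lt (j : W) (p : set R) : Prop := exists k, lt k j /\ Z k p.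

End Coheight.
Arguments Z R {W} j.
Arguments cht_eq R {W} j p.
Arguments cht_lt R {W} j p.

Section Modules.
Variables (R : comPzRingType) (M : lmodType R).

Definition is_submodule (N : set M) : Prop :=
  [/\ N 0, (forall x y, N x -> N y -> N (x + y)) & (forall r x, N x -> N (r *: x))].

(* N_p <> 0, written out: some x/1 in N_p is nonzero, i.e. some x in N is
   killed by no s outside p. *)
Definition Supp (N : set M) : set (set R) :=
  [set p | is_prime_ideal p /\ exists x, N x /\ forall s, ~ p s -> s *: x <> 0].

(* t_j(M): the largest submodule of M with support in Z_j
   (union of all such submodules) *)
Definition tors (W : wordType) (j : W) : set M :=
  \bigcup_(N in [set N | is_submodule N /\ Supp N `<=` Z R j]) N.

Definition ann (x : M) : set R := [set r | r *: x = 0].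

Definition ideal_kills (I : set R) (x : M) : Prop := forall r, I r -> r *: x = 0.

Definition Ass : set (set R) := [set p | is_prime_ideal p /\ exists x, ann x = p].

End Modules.
Arguments tors {R} M {W} j.
Arguments Ass {R} M.

(* Main.v *)
Require Import Defs.
From HB Require Import structures.
From mathcomp Require Import all_boot all_order all_algebra ring.
From mathcomp Require Import boolp classical_sets.
Import GRing.Theory.
Local Open Scope ring_scope.
Local Open Scope classical_set_scope.

Section ZLemmas.
Variables (R : comPzRingType) (W : wordType).
Local Notation lt := (@wo_lt W).

Lemma lt_irr (x : W) : ~ lt x x.
Proof.
elim: (@wo_wf W x) => y _ IH Hyy. exact: (IH y Hyy Hyy).
Qed.

Lemma Z_eq (j : W) : Z R j = @Zstep R W j (fun k _ => Z R k).
Proof.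
rewrite /Z Fix_eq //.
move=> x f g Hfg. rewrite /Zstep.
case: pselect => [h|nh] /=; first by case: (cid h) => k hk /=; rewrite Hfg.
case: pselect => // _. apply: funext => p. apply: propext; split => /=;
  move=> -[k [hk H]]; exists k, hk; first [by rewrite -Hfg | by rewrite Hfg].
Qed.

Lemma Z_zero {j : W} : is_zero j -> Z R j = Specm R.
Proof.
move=> hz; rewrite Z_eq /Zstep.
case: pselect => [h|_]; first by have [k [hk _]] := h; case: (hz k).
by case: pselect => // h; have [k hk] := h; case: (hz k).
Qed.

Lemma pred_uniq (k k' j : W) : is_pred k j -> is_pred k' j -> k' = k.
Proof.
move=> [hk Hk] [hk' Hk'].
case: (Hk k' hk') => // lt1. case: (Hk' k hk) => [->//|lt2].
by case: (@lt_irr k' (wo_trans lt1 lt2)).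
Qed.

Lemma Z_succ {k j : W} : is_pred k j -> Z R j = Z R k `|` Maxel (Spec R `\` Z R k).
Proof.
move=> hp; rewrite Z_eq /Zstep.
case: pselect => [h|nh]; last by case: nh; exists k.
case: (cid h) => k' hk' /=.
by rewrite (@pred_uniq _ _ _ hp hk').
Qed.

Lemma Z_limit {j : W} : (~ exists k, is_pred k j) -> (exists k, lt k j) ->
  Z R j = [set p | exists k, lt k j /\ Z R k p].
Proof.
move=> nh hl; rewrite Z_eq /Zstep.
case: pselect => [h|_]; first by case: nh.
case: pselect => [_|//].
apply: funext => p; apply: propext; split.
  by case=> k [hk H]; exists k.
by case=> k [hk H]; exists k, hk.
Qed.

Lemma Z_mono (j : W) : forall k, lt k j -> Z R k `<=` Z R j.
Proof.
elim/(well_founded_ind (@wo_wf W)): j => j IH k hkj p Hp.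
have [[m hm]|nh] := pselect (exists m, is_pred m j).
  rewrite (Z_succ hm); left.
  case: hm => hmj Hm. case: (Hm k hkj) => [<-//|hkm]. exact: (IH m hmj k hkm).
rewrite (Z_limit nh); last by exists k. by exists k.
Qed.

Lemma Z_closed (j : W) : forall p q, Z R j p -> is_prime_ideal q -> p `<=` q -> Z R j q.
Proof.
elim/(well_founded_ind (@wo_wf W)): j => j IH p q Hp Hq Hpq.
have [[m hm]|nh] := pselect (exists m, is_pred m j).
  move: Hp; rewrite !(Z_succ hm) => -[Hp|Hp].
    by left; exact: (IH m hm.1 p).
  have [Zq|nZq] := pselect (Z R m q); first by left.
  right. have [[Sp nZp] Hmax] := Hp.
  by rewrite (Hmax q (conj Hq nZq) Hpq).
have [[k hk]|nk] := pselect (exists k, lt k j).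
  move: Hp; rewrite (Z_limit nh); last by exists k.
  case=> k' [hk' Hk']. exists k'; split => //. exact: (IH k' hk' p).
have hz : is_zero j by move=> k hk; apply: nk; exists k.
move: Hp; rewrite (Z_zero hz) => Hp.
case: Hp => Ip n1 Hmax. case: Hq => [Iq nq1 _].
by rewrite (Hmax q Iq nq1 Hpq).
Qed.

End ZLemmas.



Section ModLemmas.
Variables (R : comPzRingType) (M : lmodType R).

Lemma noeth_max (T : Type) (P : T -> Prop) (F : T -> set R) :
  noetherian R -> (forall t, P t -> is_ideal (F t)) -> (exists t, P t) ->
  exists t, P t /\ forall t', P t' -> F t `<=` F t' -> F t' = F t.
Proof.
move=> HN Hid [t0 Pt0].
apply: contrapT => Hno.
have step : forall t : {t | P t}, exists t' : {t | P t},
    F (sval t) `<=` F (sval t') /\ F (sval t') <> F (sval t).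
  move=> [t Pt] /=. apply: contrapT => Hn. apply: Hno; exists t; split => //.
  move=> t' Pt' Hs. apply: contrapT => Hne. apply: Hn. by exists (exist _ t' Pt').
have [g Hg] := choice step.
pose u n := iter n g (exist _ t0 Pt0).
have [N HNn] := HN (fun n => F (sval (u n))) (fun n => Hid _ (svalP (u n)))
  (fun n => (Hg (u n)).1).
have := HNn N.+1 (leqnSn N). rewrite /= -/(u N). exact: (Hg (u N)).2.
Qed.

Lemma ann_ideal (x : M) : is_ideal (ann x).
Proof.
split; rewrite /ann /=.
- by rewrite scale0r.
- by move=> a b ha hb; rewrite scalerDl ha hb addr0.
- by move=> r a ha; rewrite -scalerA ha scaler0.
Qed.

Lemma ann_scale (r : R) (y : M) : ann y `<=` ann (r *: y).
Proof.
by move=> a; rewrite /ann /= scalerA mulrC -scalerA => ->; rewrite scaler0.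
Qed.

Lemma ann_prime_cyclic (x : M) : noetherian R -> x <> 0 ->
  exists a : R, a *: x <> 0 /\ is_prime_ideal (ann (a *: x)).
Proof.
move=> HN xn0.
have P1 : (1 : R) *: x <> 0 by rewrite scale1r.
have [a0 [Pa0 Hmax]] := noeth_max _ (fun a : R => a *: x <> 0)
  (fun a => ann (a *: x)) HN (fun a _ => ann_ideal (a *: x))
  (ex_intro _ 1 P1).
exists a0; split => //; split; first exact: ann_ideal.
  by rewrite /ann /= scale1r.
move=> a b hab.
have [ha|na] := pselect (ann (a0 *: x) a); first by left.
right.
have Pa : (a * a0) *: x <> 0 by rewrite -scalerA.
have Hsub : ann (a0 *: x) `<=` ann ((a * a0) *: x) by rewrite -scalerA; apply: ann_scale.
have E : ann ((a * a0) *: x) = ann (a0 *: x) := Hmax _ Pa Hsub.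
rewrite -E /ann /= scalerA.
move: hab; rewrite /ann /= scalerA.
by have -> : b * (a * a0) = a * b * a0 by ring.
Qed.

Lemma supp_ass (p : set R) (x : M) : noetherian R -> is_prime_ideal p ->
  (forall s, ~ p s -> s *: x <> 0) -> exists q, Ass M q /\ q `<=` p.
Proof.
move=> HN Pp Hx.
have [_ np1 pprime] := Pp.
have P1 : forall s, ~ p s -> s *: ((1 : R) *: x) <> 0 by move=> s ns; rewrite scale1r; exact: Hx.
have [t0 [Pt0 Hmax]] := noeth_max _
  (fun t : R => forall s, ~ p s -> s *: (t *: x) <> 0)
  (fun t => ann (t *: x)) HN (fun a _ => ann_ideal (a *: x))
  (ex_intro _ 1 P1).
have Pt0' : forall s, ~ p s -> s *: (t0 *: x) <> 0 := Pt0.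
have notp : forall a b, ~ p a -> ~ p b -> ~ p (a * b).
  by move=> a b na nb /pprime [].
exists (ann (t0 *: x)); split; last first.
  move=> r hr; apply: contrapT => nr. exact: (Pt0' r nr hr).
split; last by exists (t0 *: x).
split; first exact: ann_ideal.
  by move=> h1; apply: (Pt0' 1 np1).
move=> a b hab.
have [ha|na] := pselect (ann (t0 *: x) a); first by left.
right.
have Pa : forall s, ~ p s -> s *: ((a * t0) *: x) <> 0.
  move=> s ns E.
  have Ps : forall s', ~ p s' -> s' *: ((s * t0) *: x) <> 0.
    move=> s' ns'; rewrite -scalerA scalerA; exact: Pt0' _ (notp _ _ ns' ns).
  have Hs : ann (t0 *: x) `<=` ann ((s * t0) *: x) by rewrite -scalerA; apply: ann_scale.
  have Es : ann ((s * t0) *: x) = ann (t0 *: x) := Hmax _ Ps Hs.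
  apply: na; rewrite -Es /ann /= scalerA.
  move: E; rewrite scalerA.
  by have -> : s * (a * t0) = a * (s * t0) by ring.
have Hsub : ann (t0 *: x) `<=` ann ((a * t0) *: x) by rewrite -scalerA; apply: ann_scale.
have E : ann ((a * t0) *: x) = ann (t0 *: x) := Hmax _ Pa Hsub.
rewrite -E /ann /= scalerA.
move: hab; rewrite /ann /= scalerA.
by have -> : b * (a * t0) = a * b * t0 by ring.
Qed.

End ModLemmas.



Set Implicit Arguments. Unset Strict Implicit.
Section Prod.
Variables (R : comPzRingType) (M : lmodType R).

Lemma iprod_mono (A A' B B' : set R) : A `<=` A' -> B `<=` B' ->
  iprod A B `<=` iprod A' B'.
Proof.
move=> hA hB r [n [a [b [H ->]]]]; exists n, a, b; split => // k.
by have [h1 h2] := H k; split; [apply: hA | apply: hB].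
Qed.

Lemma iprod_kills (A B : set R) (x : M) :
  (forall a b, A a -> B b -> (a * b) *: x = 0) -> ideal_kills (iprod A B) x.
Proof.
move=> H r [n [a [b [Hab ->]]]].
rewrite scaler_suml big1 // => k _. by have [h1 h2] := Hab k; apply: H.
Qed.

Lemma iprod_kills_r (A B : set R) (x : M) :
  ideal_kills B x -> ideal_kills (iprod A B) x.
Proof.
move=> HB; apply: iprod_kills => a b _ hb.
by rewrite -scalerA HB // scaler0.
Qed.

Lemma iprod_mem (A B : set R) a b : A a -> B b -> iprod A B (a * b).
Proof.
move=> ha hb; exists 1%N, (fun _ => a), (fun _ => b); split => //.
by rewrite big_ord1.
Qed.

Lemma iprod_subl (A B : set R) : is_ideal A -> iprod A B `<=` A.
Proof.
move=> [A0 AD AM] r [n [a [b [H ->]]]].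
apply: (big_ind A) => // k _. rewrite mulrC; apply: AM. by have [] := H k.
Qed.

Lemma iprod_prime (A B p : set R) : is_prime_ideal p ->
  iprod A B `<=` p -> A `<=` p \/ B `<=` p.
Proof.
move=> [_ _ pp] H.
have [hA|nA] := pselect (A `<=` p); first by left.
have [hB|nB] := pselect (B `<=` p); first by right.
have [a [ha na]] : exists a, A a /\ ~ p a.
  apply: contrapT => Hn; apply: nA => a ha; apply: contrapT => na.
  by apply: Hn; exists a.
have [b [hb nb]] : exists b, B b /\ ~ p b.
  apply: contrapT => Hn; apply: nB => b hb; apply: contrapT => nb.
  by apply: Hn; exists b.
by case: (pp _ _ (H _ (@iprod_mem A B a b ha hb))).
Qed.

Lemma ipow_prime (q p : set R) n : is_prime_ideal p -> (0 < n)%N ->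
  ipow q n `<=` p -> q `<=` p.
Proof.
move=> Pp; elim: n => // n IH _ /= H.
case: (iprod_prime Pp H) => // Hn.
move: IH Hn; case: n {H} => [|n] IH Hn.
  have [_ np1 _] := Pp. by case: np1; apply: Hn.
exact: IH.
Qed.

Lemma pows_prime (s : seq (set R * nat)) (p : set R) : is_prime_ideal p ->
  (forall pn, pn \in s -> (0 < pn.2)%N) -> iprod_pows s `<=` p ->
  exists pn, pn \in s /\ pn.1 `<=` p.
Proof.
move=> Pp; elim: s => [|pn s IH] Hpos /= H.
  have [_ np1 _] := Pp. by case: np1; apply: H.
case: (iprod_prime Pp H) => Hn.
  exists pn; split; first by rewrite in_cons eqxx.
  have hp : (0 < pn.2)%N by apply: Hpos; rewrite in_cons eqxx.
  exact: (ipow_prime Pp hp Hn).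
have [pn' [h1 h2]] : exists pn', pn' \in s /\ pn'.1 `<=` p.
  by apply: IH Hn => pn' h; apply: Hpos; rewrite in_cons h orbT.
by exists pn'; rewrite in_cons h1 orbT.
Qed.

Lemma pows_cat_sub (s t : seq (set R * nat)) :
  iprod_pows (s ++ t) `<=` iprod_pows s.
Proof.
elim: s => [|pn s IH] //=.
by apply: iprod_mono.
Qed.

Lemma pows_cat_kills (s t : seq (set R * nat)) (y : M) :
  ideal_kills (iprod_pows t) y -> ideal_kills (iprod_pows (s ++ t)) y.
Proof.
elim: s => [|pn s IH] //= H.
by apply: iprod_kills_r; apply: IH.
Qed.

End Prod.



Section Main.
Variables (R : comPzRingType) (M : lmodType R) (W : wordType).

Lemma tors0 (j : W) : tors M j 0.
Proof.
exists [set 0]; last by [].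
split.
- split => //; first by move=> x y -> ->; rewrite addr0.
  by move=> r x ->; rewrite scaler0.
- move=> q [[_ nq1 _] [y [y0 Hy]]]. by case: (Hy 1 nq1); rewrite y0 scaler0.
Qed.

Lemma Ass_nz (p : set R) : Ass M p -> exists x : M, x <> 0 /\ ann x = p.
Proof.
move=> [[_ np1 _] [x Ex]]; exists x; split => // x0.
by apply: np1; rewrite -Ex /ann /= x0 scaler0.
Qed.

Lemma T1 (j : W) : tors M j = [set: M] <-> (forall p, Supp [set: M] p -> Z R j p).
Proof.
split.
- move=> Ht p [Pp [x [_ Hx]]]. have : tors M j x by rewrite Ht.
  case=> N [SN SuppN] Nx. apply: SuppN; split => //; by exists x.
- move=> H; apply/seteqP; split => // x _. exists [set: M] => //; split => //.

Qed.

Lemma T2 (j : W) : noetherian R ->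
  (tors M j = [set 0] <-> ~ exists p, Ass M p /\ Z R j p).
Proof.
move=> HN; split.
- move=> HT [p [Ap Zp]]. have [x [xn0 Ex]] := Ass_nz Ap.
  have : tors M j x.
    exists [set y | exists r, y = r *: x]; last by exists 1; rewrite scale1r.
    split.
    + split.
      * by exists 0; rewrite scale0r.
      * by move=> y z [r ->] [r' ->]; exists (r + r'); rewrite scalerDl.
      * by move=> r y [r' ->]; exists (r * r'); rewrite scalerA.
    + move=> q [Pq [y [[r ->] Hy]]].
      apply: (@Z_closed _ _ _ p _ Zp Pq) => t pt; apply: contrapT => nq.
      apply: (Hy t nq). rewrite -Ex /ann /= in pt.
      by rewrite scalerA mulrC -scalerA pt scaler0.
  by rewrite HT.
- move=> Hno; apply/seteqP; split => x; last by move=> ->; exact: tors0.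
  case=> N [[N0 ND NS] SuppN] Nx. apply: contrapT => xn0.
  have [a [axn0 Pq]] := @ann_prime_cyclic _ _ x HN xn0.
  apply: Hno; exists (ann (a *: x)); split; first by split => //; exists (a *: x).
  apply: SuppN; split => //; exists (a *: x); split; first exact: NS.
  by move=> s ns.
Qed.

End Main.



Section Main2.
Variables (R : comPzRingType) (M : lmodType R) (W : wordType) (i : W).

Lemma C13 : noetherian R -> nonlimit i ->
  ((tors M i = [set: M] /\ (forall j, is_pred j i -> tors M j = [set 0])) <->
   (forall p : set R, Ass M p -> cht_eq R i p)).
Proof.
move=> HN Hnl; split.
- move=> [Ht Hj] p Ap. have [x [xn0 Ex]] := Ass_nz Ap.
  have Pp : is_prime_ideal p := Ap.1.
  split.
  + apply: (T1 M i).1 => //. split => //; exists x; split => // s ns sx.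
    apply: ns; rewrite -Ex; exact: sx.
  + move=> k hk Zk. case: Hnl => [hz|[j hj]]; first exact: (hz k hk).
    have Zj : Z R j p.
      case: hj => hji Hj'. case: (Hj' k hk) => [<-//|hkj].
      exact: (@Z_mono _ _ j k hkj p Zk).
    by apply: ((T2 M j HN).1 (Hj j hj)); exists p.
- move=> H3; split.
  + apply/(T1 M i) => p [Pp [x [_ Hx]]].
    have [q [Aq qp]] := @supp_ass _ M p x HN Pp Hx.
    exact: (@Z_closed _ _ i q p (H3 q Aq).1 Pp qp).
  + move=> j hj; apply/(T2 M j HN) => -[p [Ap Zp]].
    exact: ((H3 p Ap).2 j hj.1 Zp).
Qed.

Definition good (s : seq (set R * nat)) :=
  forall pn, pn \in s -> is_prime_ideal pn.1 /\ cht_eq R i pn.1 /\ (0 < pn.2)%N.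

Lemma good_cat s t : good s -> good t -> good (s ++ t).
Proof. by move=> gs gt pn; rewrite mem_cat => /orP [/gs|/gt]. Qed.

Lemma three_to_2a : noetherian R -> (forall p : set R, Ass M p -> cht_eq R i p) ->
  forall x : M, exists s : seq (set R * nat),
   (forall pn, pn \in s -> is_prime_ideal pn.1 /\ cht_eq R i pn.1 /\ (0 < pn.2)%N)
   /\ ideal_kills (iprod_pows s) x.
Proof.
move=> HN H3.
apply: contrapT => /existsNP [x0 Hx0].
have [x [Px Hmax]] := @noeth_max R M
   (fun x => ~ exists s, good s /\ ideal_kills (iprod_pows s) x)
   (@ann R M) HN (fun t _ => @ann_ideal R M t) (ex_intro _ x0 Hx0).
have xn0 : x <> 0.
  move=> x0'; apply: Px; exists [::]; split => // r _; by rewrite x0' scaler0.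
have [a [axn0 Pq]] := @ann_prime_cyclic _ _ x HN xn0.
set q := ann (a *: x) in Pq.
have Hq3 : cht_eq R i q by apply: H3; split => //; exists (a *: x).
have Hg : forall g, q g -> exists s, good s /\ ideal_kills (iprod_pows s) (g *: x).
  move=> g qg; apply: contrapT => Pg.
  have E := Hmax _ Pg (@ann_scale R M g x).
  apply: axn0. have : ann (g *: x) a.
    have qg' : g *: (a *: x) = 0 := qg.
    by rewrite /ann /= scalerA mulrC -scalerA qg'.
  by rewrite E; apply.
pose K (s : seq (set R * nat)) := [set g : R | ideal_kills (iprod_pows s) (g *: x)].
have Kid : forall s, good s -> is_ideal (K s).
  move=> s _; split; rewrite /K /=.
  - by move=> r _; rewrite scale0r scaler0.
  - by move=> g h hg hh r hr; rewrite scalerDl scalerDr hg // hh // addr0.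
  - by move=> r g hg r' hr'; rewrite -scalerA scalerA mulrC -scalerA hg // scaler0.
have g0 : good [::] by [].
have [s0 [gs0 Kmax]] := @noeth_max R _ good K HN Kid (ex_intro _ _ g0).
have qK : q `<=` K s0.
  move=> g qg. have [sg [gsg ksg]] := Hg g qg.
  have Hsub : K s0 `<=` K (s0 ++ sg).
    move=> h hh r hr; apply: hh; exact: (pows_cat_sub hr).
  have E := Kmax _ (good_cat gs0 gsg) Hsub.
  rewrite -E /K /=. exact: pows_cat_kills.
apply: Px; exists ((q, 1%N) :: s0); split.
  move=> pn; rewrite in_cons => /orP [/eqP -> //|]; exact: gs0.
change (ideal_kills (iprod (iprod q [set: R]) (iprod_pows s0)) x).
apply: iprod_kills => c b hc hb.
have Kc : K s0 c.
  apply: (iprod_subl (Kid _ gs0)). exact: (iprod_mono qK (@subset_refl _ _) hc).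
by rewrite mulrC -scalerA Kc.
Qed.

Lemma C23 : noetherian R ->
  ((forall x : M, exists s : seq (set R * nat),
      (forall pn, pn \in s -> is_prime_ideal pn.1 /\ cht_eq R i pn.1 /\ (0 < pn.2)%N)
      /\ ideal_kills (iprod_pows s) x)
   /\ (forall (p : set R) (x : M), is_prime_ideal p -> cht_lt R i p ->
          ideal_kills p x -> x = 0))
  <-> (forall p : set R, Ass M p -> cht_eq R i p).
Proof.
move=> HN; split.
- move=> [H2a H2b] p Ap. have [x [xn0 Ex]] := Ass_nz Ap.
  have Pp : is_prime_ideal p := Ap.1.
  split; last first.
    move=> k hk Zk; apply: xn0; apply: (H2b p x Pp) => [|r pr]; first by exists k.
    by rewrite -Ex in pr.
  have [s [gs ks]] := H2a x.
  have sub : iprod_pows s `<=` p by move=> r hr; rewrite -Ex; exact: ks.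
  have [pn [hpn pnp]] := pows_prime Pp (fun pn h => (gs pn h).2.2) sub.
  exact: (@Z_closed _ _ i pn.1 p (gs pn hpn).2.1.1 Pp pnp).
- move=> H3; split; first exact: three_to_2a.
  move=> p x Pp [k [hk Zk]] kp; apply: contrapT => xn0.
  have [a [axn0 Pq]] := @ann_prime_cyclic _ _ x HN xn0.
  have Zq : Z R k (ann (a *: x)).
    apply: (@Z_closed _ _ k p _ Zk Pq) => r pr.
    by rewrite /ann /= scalerA mulrC -scalerA kp // scaler0.
  have Aq : Ass M (ann (a *: x)) by split => //; exists (a *: x).
  exact: ((H3 _ Aq).2 k hk Zq).
Qed.

End Main2.

Theorem corollary2p6 (R : comPzRingType) (M : lmodType R)
    (W : wordType) (i : W) :
  noetherian R -> [set: M] <> [set 0] -> nonlimit i ->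
  [/\ (* (1) <-> (2) *)
      (tors M i = [set: M] /\
       (forall j, is_pred j i -> tors M j = [set 0]))
      <->
      ((forall x : M, exists s : seq (set R * nat),
          (forall pn, pn \in s -> is_prime_ideal pn.1 /\ cht_eq R i pn.1
                                  /\ (0 < pn.2)%N)
          /\ ideal_kills (iprod_pows s) x)
       /\
       (forall (p : set R) (x : M), is_prime_ideal p -> cht_lt R i p ->
          ideal_kills p x -> x = 0)),
    (* (2) <-> (3) *)
      ((forall x : M, exists s : seq (set R * nat),
          (forall pn, pn \in s -> is_prime_ideal pn.1 /\ cht_eq R i pn.1
                                  /\ (0 < pn.2)%N)
          /\ ideal_kills (iprod_pows s) x)
       /\
       (forall (p : set R) (x : M), is_prime_ideal p -> cht_lt R i p ->
          ideal_kills p x -> x = 0))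
      <->
      (forall p : set R, Ass M p -> cht_eq R i p)
    & (* (1) <-> (3) *)
      (tors M i = [set: M] /\
       (forall j, is_pred j i -> tors M j = [set 0]))
      <->
      (forall p : set R, Ass M p -> cht_eq R i p)].
Proof.
move=> HN _ Hnl.
have h13 := @C13 R M W i HN Hnl.
have h23 := @C23 R M W i HN.
split.
- split => H; [apply/h23; apply/h13 | apply/h13; apply/h23]; exact H.
- exact h23.
- exact h13.
Qed.
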